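(* For every dynamical system $(S,g)$, the following are equivalent: (1) $(S,g)$ is timed; (2) for every $n\in\mathbb{N}\cup\{\infty\}$ and all $s,w\in S$, if $g(s)=g^{n+1}(w)$ then $s=g^n(w')$ for some $w'\in S$; (3) all maximal $g$-histories of the same state have the same length; (4) there exists an equivalence relation $=^\tau$ on $S$ satisfying the two synchronicity conditions: (i) $s=^\tau w$ iff $g(s)=^\tau g(w)$, and (ii) if $s=^\tau g(w)$ then $s=g(w')$ for some $w'\in S$.
   Context: A dynamical system is a pair $(S,g)$ with $g:S\to S$. A state $s$ is initial if $s\neq g(w)$ for all $w\in S$. A timing map is $\tau:S\to\mathbb{N}\cup\{\infty\}$ with (a) $\tau_s=0$ for every initial state $s$ and (b) $\tau_{g(s)}=\tau_s+1$ for all $s$ (with $\infty+1=\infty$); $(S,g)$ is timed if a timing map exists. A $g$-history of a state $s$ is a finite or infinite sequence $(s_0=s,s_1,s_2,\dots)$ with $s_n=g(s_{n+1})$ for all consecutive entries; its length is the number of states in it; it is maximal if it is infinite or cannot be extended to a $g$-history of greater length. *)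

(* Defs.v *)
From Stdlib Require Import List.
Import ListNotations.

(* N ∪ {∞} is represented by option nat: Some n = n, None = ∞. *)
Definition nat_inf := option nat.
Definition succ_inf (n : nat_inf) : nat_inf :=
  match n with Some k => Some (S k) | None => None end.

Fixpoint iterg {S : Type} (g : S -> S) (n : nat) (x : S) : S :=
  match n with 0 => x | Datatypes.S k => g (iterg g k x) end.

Definition initial {S : Type} (g : S -> S) (s : S) : Prop :=
  forall w, s <> g w.

Definition timing_map {S : Type} (g : S -> S) (tau : S -> nat_inf) : Prop :=
  (forall s, initial g s -> tau s = Some 0) /\
  (forall s, tau (g s) = succ_inf (tau s)).

Definition timed {S : Type} (g : S -> S) : Prop :=
  exists tau : S -> nat_inf, timing_map g tau.

(* Finite g-history (s_0 = s, s_1, ..., s_k) is represented by s :: t where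
   is_hist g s t says s = g(t_0), t_0 = g(t_1), ...  Its length is 1 + length t. *)
Fixpoint is_hist {S : Type} (g : S -> S) (s : S) (t : list S) : Prop :=
  match t with
  | [] => True
  | x :: t' => s = g x /\ is_hist g x t'
  end.

Definition inf_hist {S : Type} (g : S -> S) (s : S) (h : nat -> S) : Prop :=
  h 0 = s /\ forall n, h n = g (h (Datatypes.S n)).

(* "x = g^n(w) for some w", for n ∈ N ∪ {∞}; for n = ∞ we read g^∞(w) as
   a state having an infinite g-history. *)
Definition in_image_pow {S : Type} (g : S -> S) (n : nat_inf) (x : S) : Prop :=
  match n with
  | Some k => exists w, x = iterg g k w
  | None => exists h, inf_hist g x h
  end.

Definition max_hist_length {S : Type} (g : S -> S) (s : S) (L : nat_inf) : Prop :=
  (exists t : list S, L = Some (Datatypes.S (length t)) /\ is_hist g s t /\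
     ~ (exists u : list S, u <> [] /\ is_hist g s (t ++ u)))
  \/ (L = None /\ exists h, inf_hist g s h).

(* Main.v *)
Require Import Defs.
From Stdlib Require Import RelationClasses.
From Stdlib Require Import List Lia Classical ClassicalEpsilon.
Import ListNotations.

Section Aux.
Variable T : Type.
Variable g : T -> T.

Definition img (k : nat) (s : T) := exists w, s = iterg g k w.

Lemma iter_shift k w : iterg g (Datatypes.S k) w = iterg g k (g w).
Proof. induction k; [reflexivity|]. change (g (iterg g (Datatypes.S k) w) = g (iterg g k (g w))). rewrite IHk. reflexivity. Qed.

Lemma img_S k s : img (Datatypes.S k) s -> img k s.
Proof. intros [w ->]. exists (g w). apply iter_shift. Qed.

Lemma img_mono k m : k <= m -> forall s, img m s -> img k s.
Proof. induction 1; auto. intros s H0. apply IHle, img_S, H0. Qed.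

Lemma inf_build (P : T -> Prop) :
  (forall x, P x -> exists y, P y /\ x = g y) ->
  forall s, P s -> exists h, inf_hist g s h.
Proof.
  intros H s Ps.
  set (F := fun x : {x | P x} =>
        constructive_indefinite_description _ (H _ (proj2_sig x))).
  set (next := fun x : {x | P x} =>
        exist P (proj1_sig (F x)) (proj1 (proj2_sig (F x)))).
  set (sq := fix sq (n : nat) : {x | P x} :=
        match n with 0 => exist P s Ps | Datatypes.S n => next (sq n) end).
  exists (fun n => proj1_sig (sq n)). split.
  - reflexivity.
  - intro n. simpl. exact (proj2 (proj2_sig (F (sq n)))).
Qed.

Section Tau.
Variable tau : T -> nat_inf.
Hypothesis Ht : timing_map g tau.

Lemma tau_img k : forall s j, tau s = Some j -> k <= j -> img k s.
Proof.
  destruct Ht as [H0 H1].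
  induction k; intros s j E L.
  - exists s; reflexivity.
  - destruct (classic (exists w, s = g w)) as [[w ->]|N].
    + rewrite H1 in E. destruct (tau w) eqn:Ew; simpl in E; try discriminate.
      injection E as <-. destruct (IHk w n Ew ltac:(lia)) as [u ->].
      exists u; reflexivity.
    + assert (initial g s) by (intros w e; apply N; eauto).
      rewrite H0 in E by auto. injection E as <-. lia.
Qed.

Lemma tau_img_none k : forall s, tau s = None -> img k s.
Proof.
  destruct Ht as [H0 H1].
  induction k; intros s E.
  - exists s; reflexivity.
  - destruct (classic (exists w, s = g w)) as [[w ->]|N].
    + rewrite H1 in E. destruct (tau w) eqn:Ew; simpl in E; try discriminate.
      destruct (IHk w Ew) as [u ->]. exists u; reflexivity.
    + assert (initial g s) by (intros w e; apply N; eauto).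
      rewrite H0 in E by auto. discriminate.
Qed.

Lemma tau_none_inf s : tau s = None -> exists h, inf_hist g s h.
Proof.
  destruct Ht as [H0 H1].
  intro E0. apply (inf_build (fun x => tau x = None)); [|exact E0]. intros x E.
  destruct (classic (exists w, x = g w)) as [[w ->]|N].
  - exists w. split; auto. rewrite H1 in E. destruct (tau w); simpl in E; congruence.
  - assert (initial g x) by (intros w e; apply N; eauto).
    rewrite H0 in E by auto. discriminate.
Qed.

Lemma inf_tau_none s h : inf_hist g s h -> tau s = None.
Proof.
  destruct Ht as [H0 H1]. intros [Hs Hh].
  assert (K : forall j i, tau (h i) <> Some j).
  { induction j; intros i E; rewrite Hh, H1 in E;
      destruct (tau (h (Datatypes.S i))) eqn:E2; simpl in E; try discriminate.
    injection E as ->. eapply IHj; eauto. }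
  subst s. destruct (tau (h 0)) eqn:E; auto. exfalso; eapply K; eauto.
Qed.

Lemma tau_iter k : forall w j, tau (iterg g k w) = Some j -> k <= j.
Proof.
  destruct Ht as [H0 H1].
  induction k; intros w j E; [lia|]. simpl in E. rewrite H1 in E.
  destruct (tau (iterg g k w)) eqn:E2; simpl in E; try discriminate.
  injection E as <-. specialize (IHk _ _ E2). lia.
Qed.

Lemma maxfin_tau s t : is_hist g s t ->
  ~ (exists u, u <> [] /\ is_hist g s (t ++ u)) -> tau s = Some (length t).
Proof.
  destruct Ht as [H0 H1].
  revert s; induction t as [|x t IH]; intros s Hh Hm; simpl.
  - apply H0. intros w e. apply Hm. exists [w]. split; [congruence|]. simpl; auto.
  - destruct Hh as [-> Hh]. rewrite H1, (IH x Hh); auto.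
    intros [u [U V]]. apply Hm. exists u. split; auto. simpl; auto.
Qed.

End Tau.

Definition P2 := forall k s w, g s = iterg g (Datatypes.S k) w -> img k s.

Definition Dk s k := img k s /\ ~ img (Datatypes.S k) s.

Lemma Dk_uniq s k m : Dk s k -> Dk s m -> k = m.
Proof.
  intros [A B] [C D].
  destruct (PeanoNat.Nat.lt_trichotomy k m) as [L|[L|L]]; auto; exfalso.
  - apply B. eapply img_mono; [|exact C]. lia.
  - apply D. eapply img_mono; [|exact A]. lia.
Qed.

Definition tau0 (s : T) : nat_inf :=
  match excluded_middle_informative (exists k, Dk s k) with
  | left e => Some (proj1_sig (constructive_indefinite_description _ e))
  | right _ => None
  end.

Lemma tau0_some s k : Dk s k -> tau0 s = Some k.
Proof.
  intro D. unfold tau0. destruct excluded_middle_informative as [e|n].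
  - destruct constructive_indefinite_description as [m Hm]; simpl.
    f_equal. eapply Dk_uniq; eauto.
  - exfalso; eauto.
Qed.

Lemma tau0_none s : (forall k, ~ Dk s k) -> tau0 s = None.
Proof.
  intro D. unfold tau0. destruct excluded_middle_informative as [[k e]|n]; auto.
  exfalso; eapply D; eauto.
Qed.

Lemma P2_timed : P2 -> timed g.
Proof.
  intro HP. exists tau0. split.
  - intros s I. apply tau0_some. split; [exists s; reflexivity|].
    intros [w e]. apply (I w). exact e.
  - intro s. destruct (classic (exists k, Dk s k)) as [[k D]|N].
    + rewrite (tau0_some s k D). apply tau0_some. destruct D as [[w ->] B]. split.
      * exists w; reflexivity.
      * intros [w' E]. apply B. eapply HP. exact E.
    + rewrite tau0_none; [rewrite tau0_none; auto|].
      * intros k D; apply N; eauto.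
      * intros [|k] [A B].
        -- apply B. exists s; reflexivity.
        -- apply N. exists k. split.
           ++ destruct A as [w E]. eapply HP. exact E.
           ++ intros [w ->]. apply B. exists w; reflexivity.
Qed.

Definition maxfin s t := is_hist g s t /\ ~ (exists u, u <> [] /\ is_hist g s (t ++ u)).

Lemma maxfin_g x t : maxfin x t -> maxfin (g x) (x :: t).
Proof.
  intros [A B]. split; [simpl; auto|].
  intros [u [U [_ V]]]. apply B; eauto.
Qed.

End Aux.

Theorem fact5p2 (S : Type) (g : S -> S) :
  (timed g <->
     (forall (n : nat_inf) (s : S),
         in_image_pow g (succ_inf n) (g s) -> in_image_pow g n s)) /\
  (timed g <->
     (forall (s : S) (L1 L2 : nat_inf),
         max_hist_length g s L1 -> max_hist_length g s L2 -> L1 = L2)) /\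
  (timed g <->
     (exists R : S -> S -> Prop,
         Equivalence R /\
         (forall s w, R s w <-> R (g s) (g w)) /\
         (forall s w, R s (g w) -> exists w', s = g w'))).
Proof.
  split; [|split].
  - split.
    + intros [tau Ht] [k|] s H; simpl in H |- *.
      * destruct H as [w E]. simpl in E.
        assert (E2 : tau s = tau (iterg g k w)).
        { destruct Ht as [_ H1]. pose proof (f_equal tau E) as F.
          rewrite !H1 in F. destruct (tau s), (tau (iterg g k w)); simpl in F; congruence. }
        destruct (tau s) eqn:Es.
        -- eapply (tau_img _ g tau Ht k s n Es). symmetry in E2.
           exact (tau_iter _ g tau Ht k w n E2).
        -- exact (tau_img_none _ g tau Ht k s Es).
      * destruct H as [h Hh]. apply (tau_none_inf _ g tau Ht).
        pose proof (inf_tau_none _ g tau Ht _ _ Hh) as E.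
        destruct Ht as [_ H1]. rewrite H1 in E. destruct (tau s); simpl in E; congruence.
    + intro H. apply P2_timed. intros k s w E.
      exact (H (Some k) s (ex_intro _ w E)).
  - split.
    + intros [tau Ht] s L1 L2.
      assert (K : forall L, max_hist_length g s L ->
                 L = match tau s with Some j => Some (Datatypes.S j) | None => None end).
      { intros L [[t [-> [A B]]]|[-> [h Hh]]].
        - rewrite (maxfin_tau _ g tau Ht s t A B). reflexivity.
        - rewrite (inf_tau_none _ g tau Ht _ _ Hh). reflexivity. }
      intros A B. rewrite (K _ A), (K _ B). reflexivity.
    + intro H3.
      assert (U : forall s t1 t2, maxfin _ g s t1 -> maxfin _ g s t2 -> length t1 = length t2).
      { intros s t1 t2 [A B] [C D].
        assert (Z := H3 s _ _ (or_introl (ex_intro _ t1 (conj eq_refl (conj A B))))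
                          (or_introl (ex_intro _ t2 (conj eq_refl (conj C D))))).
        congruence. }
      assert (NI : forall s t h, maxfin _ g s t -> inf_hist g s h -> False).
      { intros s t h [A B] Hh.
        assert (Z := H3 s _ _ (or_introl (ex_intro _ t (conj eq_refl (conj A B))))
                          (or_intror (conj eq_refl (ex_intro _ h Hh)))).
        discriminate. }
      set (tm := fun s => match excluded_middle_informative (exists t, maxfin _ g s t) with
                 | left e => Some (length (proj1_sig (constructive_indefinite_description _ e)))
                 | right _ => None end).
      assert (TS : forall s t, maxfin _ g s t -> tm s = Some (length t)).
      { intros s t M. unfold tm. destruct excluded_middle_informative as [e|n].
        - destruct constructive_indefinite_description as [t' M']; simpl. f_equal; eauto.
        - exfalso; eauto. }
      assert (TN : forall s, ~ (exists t, maxfin _ g s t) -> tm s = None).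
      { intros s N. unfold tm. destruct excluded_middle_informative; tauto. }
      exists tm. split.
      * intros s I. apply (TS s []). split; [simpl; auto|].
        intros [[|x u] [A B]]; [congruence|]. destruct B as [B _]. exact (I x B).
      * intro s. destruct (classic (exists t, maxfin _ g s t)) as [[t M]|N].
        -- rewrite (TS _ _ M), (TS _ _ (maxfin_g _ g _ _ M)). reflexivity.
        -- rewrite (TN s N). apply TN. intros [t M].
           destruct (inf_build _ g (fun x => ~ (exists t, maxfin _ g x t))) with (s := s)
             as [h [h0 hh]]; auto.
           ++ intros x Nx. destruct (classic (exists w, x = g w)) as [[w ->]|Nw].
              ** exists w. split; auto. intros [t' M']. apply Nx. exists (w :: t').
                 apply maxfin_g; auto.
              ** exfalso. apply Nx. exists []. split; [simpl; auto|].
                 intros [[|y u] [A B]]; [congruence|]. destruct B as [B _]. eauto.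
           ++ apply (NI (g s) t (fun n => match n with 0 => g s | Datatypes.S n => h n end) M).
              split; auto. intros [|n]; [congruence|]. apply hh.
  - split.
    + intros [tau [H0 H1]]. exists (fun s w => tau s = tau w). split; [|split].
      * constructor; red; intros; congruence.
      * intros s w. rewrite !H1. destruct (tau s), (tau w); simpl; split; intro; congruence.
      * intros s w E. apply NNPP. intro N.
        assert (I : initial g s) by (intros w' e; apply N; eauto).
        rewrite (H0 s I), H1 in E. destruct (tau w); simpl in E; discriminate.
    + intros [R [Eq [Hi Hii]]]. apply P2_timed.
      assert (K : forall k s w, R s (iterg g k w) -> img _ g k s).
      { induction k; intros s w E.
        - exists s; reflexivity.
        - simpl in E. destruct (Hii _ _ E) as [w' ->].
          apply Hi in E. destruct (IHk _ _ E) as [u ->]. exists u; reflexivity. }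
      intros k s w E. apply (K k s w). apply Hi. simpl in E. rewrite E. reflexivity.
Qed.
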